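(* Let $g(\mathbf{x})=\pi\,\phi_1(\mathbf{x})+(1-\pi)\,\phi_2(\mathbf{x})$, $\mathbf{x}\in\mathbb{R}^D$, be a mixture of two multivariate normal densities $\phi_j(\mathbf{x})=\phi(\mathbf{x};\boldsymbol{\mu}_j,\Sigma_j)$. Then for $\alpha\in[0,1]$, $$\kappa(\alpha)=[p(\alpha)]^2\,[1-\alpha\bar\alpha\,p(\alpha)],$$ where $\bar\alpha=1-\alpha$ and $p(\alpha)=(\boldsymbol{\mu}_2-\boldsymbol{\mu}_1)'\Sigma_1^{-1}S_\alpha^{-1}\Sigma_2^{-1}S_\alpha^{-1}\Sigma_2^{-1}S_\alpha^{-1}\Sigma_1^{-1}(\boldsymbol{\mu}_2-\boldsymbol{\mu}_1)$.
   Context: $\phi(\mathbf{x};\boldsymbol{\mu},\Sigma)$ is the normal density with mean $\boldsymbol{\mu}$ and positive definite covariance $\Sigma$. $S_\alpha=\bar\alpha\Sigma_1^{-1}+\alpha\Sigma_2^{-1}$, and the ridgeline is $\mathbf{x}^*(\alpha)=S_\alpha^{-1}[\bar\alpha\Sigma_1^{-1}\boldsymbol{\mu}_1+\alpha\Sigma_2^{-1}\boldsymbol{\mu}_2]$. Write $\phi_j(\alpha)=\phi_j(\mathbf{x}^*(\alpha))$, with primes denoting derivatives in $\alpha$. The curvature function is $$\kappa(\alpha)=\frac{\phi_2''(\alpha)\phi_1'(\alpha)}{\phi_2(\alpha)\phi_1(\alpha)}-\frac{\phi_1''(\alpha)\phi_2'(\alpha)}{\phi_1(\alpha)\phi_2(\alpha)}.$$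 *)

(* Defs.v *)
From HB Require Import structures.
From mathcomp Require Import all_boot all_order all_algebra.
From mathcomp Require Import all_classical all_reals all_analysis.
Set Implicit Arguments. Unset Strict Implicit. Unset Printing Implicit Defensive.
Import Order.TTheory GRing.Theory Num.Theory.
Local Open Scope ring_scope.

Section Defs.
Variables (R : realType) (D : nat).

Definition bilin (u : 'cV[R]_D) (A : 'M[R]_D) (v : 'cV[R]_D) : R :=
  (u^T *m A *m v) 0 0.

Definition posdef (S : 'M[R]_D) : Prop :=
  S^T = S /\ forall v : 'cV[R]_D, v != 0 -> 0 < bilin v S v.

Definition normal_pdf (mu : 'cV[R]_D) (S : 'M[R]_D) (x : 'cV[R]_D) : R :=
  expR (- (bilin (x - mu) (invmx S) (x - mu)) / 2)
  / Num.sqrt ((2 * pi) ^+ D * \det S).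

Definition Salpha (S1 S2 : 'M[R]_D) (a : R) : 'M[R]_D :=
  (1 - a) *: invmx S1 + a *: invmx S2.

Definition ridgeline (mu1 mu2 : 'cV[R]_D) (S1 S2 : 'M[R]_D) (a : R) : 'cV[R]_D :=
  invmx (Salpha S1 S2 a) *m ((1 - a) *: (invmx S1 *m mu1) + a *: (invmx S2 *m mu2)).

Definition phi_along (mu1 mu2 : 'cV[R]_D) (S1 S2 : 'M[R]_D) (mu : 'cV[R]_D)
  (S : 'M[R]_D) : R -> R :=
  fun a => normal_pdf mu S (ridgeline mu1 mu2 S1 S2 a).

Definition kappa (mu1 mu2 : 'cV[R]_D) (S1 S2 : 'M[R]_D) (a : R) : R :=
  let f1 := phi_along mu1 mu2 S1 S2 mu1 S1 in
  let f2 := phi_along mu1 mu2 S1 S2 mu2 S2 in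
  derive1n 2 f2 a * derive1 f1 a / (f2 a * f1 a)
  - derive1n 2 f1 a * derive1 f2 a / (f1 a * f2 a).

Definition ppoly (mu1 mu2 : 'cV[R]_D) (S1 S2 : 'M[R]_D) (a : R) : R :=
  let Si := invmx (Salpha S1 S2 a) in
  bilin (mu2 - mu1)
    (invmx S1 *m Si *m invmx S2 *m Si *m invmx S2 *m Si *m invmx S1)
    (mu2 - mu1).

Definition mixture2 (w : R) (mu1 mu2 : 'cV[R]_D) (S1 S2 : 'M[R]_D)
  (x : 'cV[R]_D) : R :=
  w * normal_pdf mu1 S1 x + (1 - w) * normal_pdf mu2 S2 x.

End Defs.

(* Main.v *)
Require Import Defs.
From HB Require Import structures.
From mathcomp Require Import all_boot all_order all_algebra.
From mathcomp Require Import all_classical all_reals all_analysis.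
Import Order.TTheory GRing.Theory Num.Theory.
Local Open Scope ring_scope.

Import numFieldNormedType.Exports.
From mathcomp Require Import ring lra.

Section MxDer.
Variable R : realType.

Lemma is_derive_mx {m n} (M : R -> 'M[R]_(m,n)) (t : R) (D : 'M[R]_(m,n)) :
  (forall i j, is_derive t 1 (fun x => M x i j) (D i j)) -> is_derive t 1 M D.
Proof.
move=> H.
have dM : derivable M t 1 by apply/derivable_mxP => i j; case: (H i j).
apply: DeriveDef => //; rewrite derive_mx //; apply/matrixP => i j.
by rewrite mxE; case: (H i j).
Qed.

Lemma is_derive_mx_entry {m n} (M : R -> 'M[R]_(m,n)) (t : R) (D : 'M[R]_(m,n)) i j :
  is_derive t 1 M D -> is_derive t 1 (fun x => M x i j) (D i j).
Proof.
case=> dM <-.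
have dMe := (derivable_mxP M t 1).1 dM i j.
apply: DeriveDef => //; by rewrite derive_mx // mxE.
Qed.



Lemma is_derive_mulmx {m n k} {M : R -> 'M[R]_(m,n)} {N : R -> 'M[R]_(n,k)} {t : R} {DM DN} :
  is_derive t 1 M DM -> is_derive t 1 N DN ->
  is_derive t 1 (fun x => M x *m N x) (DM *m N t + M t *m DN).
Proof.
move=> hM hN; apply: is_derive_mx => i j.
have E : (fun x => (M x *m N x) i j) =
   \sum_(l < n) ((fun x => M x i l) * (fun x => N x l j)).
  by apply/funext=> x; rewrite mxE fct_sumE.
rewrite E; apply: is_derive_eq.
  apply: is_derive_sum => l; apply: is_deriveM.
    exact: is_derive_mx_entry hM.
  exact: is_derive_mx_entry hN.
rewrite !mxE -big_split /=; apply: eq_bigr => l _.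
by rewrite /GRing.scale /= addrC; congr (_ + _); rewrite mulrC.
Qed.

Lemma is_derive_trmx {m n} {M : R -> 'M[R]_(m,n)} {t : R} {D} :
  is_derive t 1 M D -> is_derive t 1 (fun x => (M x)^T) D^T.
Proof.
move=> hM; apply: is_derive_mx => i j; rewrite mxE.
have -> : (fun x => (M x)^T i j) = (fun x => M x j i) by apply/funext=> x; rewrite mxE.
exact: is_derive_mx_entry.
Qed.

Lemma is_derive_mxcst {m n} (C : 'M[R]_(m,n)) (t : R) : is_derive t 1 (fun _ => C) 0.
Proof. exact: is_derive_cst. Qed.


Lemma is_derive_affine {m n} (A0 A1 : 'M[R]_(m,n)) (t : R) :
  is_derive t 1 (fun x => A0 + x *: A1) A1.
Proof.
apply: is_derive_mx => i j.
have -> : (fun x => (A0 + x *: A1) i j) = cst (A0 i j) + (@id R) * cst (A1 i j).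
  by apply/funext => x; rewrite !mxE.
apply: is_derive_eq.
by rewrite /GRing.scale /= mulr0 !add0r mulr1.
Qed.

Section PolyMx.
Variables (n : nat) (A0 A1 : 'M[R]_n).

Definition PM : 'M[{poly R}]_n := map_mx polyC A0 + 'X *: map_mx polyC A1.

Lemma PM_eval t : map_mx (horner_eval t) PM = A0 + t *: A1.
Proof. by apply/matrixP => i j; rewrite !mxE /horner_eval !hornerE. Qed.

Lemma det_eval t : \det (A0 + t *: A1) = (\det PM).[t].
Proof. by rewrite -PM_eval det_map_mx. Qed.

Lemma adj_eval t i j : \adj (A0 + t *: A1) i j = (\adj PM i j).[t].
Proof. by rewrite -PM_eval -map_mx_adj mxE. Qed.

Lemma det_near {t} : \det (A0 + t *: A1) != 0 ->
  \forall x \near t, \det (A0 + x *: A1) != 0.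
Proof.
rewrite det_eval => h.
have := cvgr_neq0 _ (@continuous_horner _ (\det PM) t) h.
move=> H; near=> x; rewrite det_eval; near: x; exact: H.
Unshelve. all: by end_near.
Qed.

Definition Gf x := invmx (A0 + x *: A1).

Lemma Gf_derivable {t} : \det (A0 + t *: A1) != 0 -> derivable Gf t 1.
Proof.
move=> h.
pose Gr := fun x => \matrix_(i, j) (((\det PM).[x])^-1 * (\adj PM i j).[x]).
have dGr : derivable Gr t 1.
  apply/derivable_mxP => i j.
  have -> : (fun x => Gr x i j) =
     (fun x => ((\det PM).[x])^-1) * horner (\adj PM i j).
    by apply/funext => x; rewrite mxE.
  apply: derivableM; last exact: derivable_horner.
  apply: derivableV; first by rewrite -det_eval.
  exact: derivable_horner.
suff Hn : {near t, Gr =1 Gf} by exact: near_eq_derivable Hn dGr.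
near=> x.
have hx : \det (A0 + x *: A1) != 0 by near: x; exact: det_near.
rewrite /Gr /Gf /invmx unitmxE unitfE hx; apply/matrixP => i j.
rewrite !mxE det_eval; congr (_ * _); have := adj_eval x i j; rewrite !mxE => ->.
Unshelve. all: by end_near.
Qed.

Lemma Gf_is_derive t : \det (A0 + t *: A1) != 0 ->
  is_derive t 1 Gf (- (Gf t *m A1 *m Gf t)).
Proof.
move=> h.
have dG := Gf_derivable h.
have hG : is_derive t 1 Gf ('D_1 Gf t) by exact: derivableP.
have hP := is_derive_mulmx hG (is_derive_affine A0 A1 t).
have hC : is_derive t 1 (fun x => Gf x *m (A0 + x *: A1)) 0.
  apply: (near_eq_is_derive _ (is_derive_mxcst 1%:M t)).
  near=> x.
  have hx : \det (A0 + x *: A1) != 0 by near: x; exact: det_near.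
  by rewrite /Gf mulVmx // unitmxE unitfE.
have E : 'D_1 Gf t *m (A0 + t *: A1) + Gf t *m A1 = 0.
  by rewrite -hP.(derive_val) hC.(derive_val).
have U : A0 + t *: A1 \in unitmx by rewrite unitmxE unitfE.
suff -> : - (Gf t *m A1 *m Gf t) = 'D_1 Gf t by [].
rewrite -[RHS]mulmx1 -(mulmxV U) mulmxA.
move/eqP: E; rewrite addr_eq0 => /eqP ->.
by rewrite mulNmx.
Unshelve. all: by end_near.
Qed.

End PolyMx.

End MxDer.

Section Alg.
Variables (R : realType) (n : nat) (A B G : 'M[R]_n) (b : R).
Let S := (1 - b) *: A + b *: B.
Hypotheses (hGS : G *m S = 1%:M) (hSG : S *m G = 1%:M).

Lemma F0 : A *m G *m B = B *m G *m A.
Proof.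
have eA : forall X : 'M[R]_n, X *m G *m S = X by move=> X; rewrite -mulmxA hGS mulmx1.
have eA' : forall X : 'M[R]_n, S *m G *m X = X by move=> X; rewrite hSG mul1mx.
have e1 : b *: (A *m G *m B) = b *: (B *m G *m A).
  have := eA A; rewrite -{2}(eA' A) /S mulmxDr -!scalemxAr !mulmxDl -!scalemxAl.
  by move/addrI.
have e2 : (1 - b) *: (A *m G *m B) = (1 - b) *: (B *m G *m A).
  have := eA B; rewrite -{2}(eA' B) /S mulmxDr -!scalemxAr !mulmxDl -!scalemxAl.
  by move/addIr/esym.
have H : forall X : 'M[R]_n, X = (1 - b) *: X + b *: X.
  by move=> X; rewrite -scalerDl subrK scale1r.
by rewrite [LHS]H [RHS]H e1 e2.
Qed.

Variables (m1 m2 : 'cV[R]_n).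
Let d := m2 - m1.
Let x := G *m ((1 - b) *: (A *m m1) + b *: (B *m m2)).

Lemma F1 : x - m1 = b *: (G *m (B *m d)).
Proof.
rewrite /x -{2}[m1]mul1mx -hGS -mulmxA -mulmxBr [RHS]scalemxAr; congr (G *m _).
rewrite /S mulmxDl -!scalemxAl /d mulmxBr scalerBr opprD addrACA subrr add0r.
by [].
Qed.

Lemma F2 : m2 - x = (1 - b) *: (G *m (A *m d)).
Proof.
rewrite /x -{1}[m2]mul1mx -hGS -mulmxA -mulmxBr [RHS]scalemxAr; congr (G *m _).
rewrite /S mulmxDl -!scalemxAl /d mulmxBr scalerBr opprD addrACA subrr addr0.
by [].
Qed.

Let c := (1 - b) *: (A *m m1) + b *: (B *m m2).
Definition xd := - (G *m (B - A) *m G) *m c + G *m (B *m m2 - A *m m1).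

Lemma Fxd : xd = G *m (A *m G *m B) *m d.
Proof.
have -> : xd = G *m (B *m (m2 - x) + A *m (x - m1)).
  rewrite /xd mulNmx -!mulmxA -/x -mulmxN -mulmxDr; congr (G *m _).
  rewrite !mulmxBr mulmxBl opprB [RHS]addrC addrACA [RHS]addrACA.
  by congr (_ + _); rewrite addrC.
rewrite F1 F2 -!scalemxAr !mulmxA F0.
by rewrite -scalerDl subrK scale1r -F0 !mulmxA.
Qed.


Hypotheses (hA : A^T = A) (hB : B^T = B) (hG : G^T = G).

Definition pp := (d^T *m (A *m G *m B *m G *m B *m G *m A) *m d) 0 0.

Lemma ppE : pp = (d^T *m (A *m G *m B) *m G *m (A *m G *m B) *m d) 0 0.
Proof.
rewrite /pp.
have -> : d^T *m (A *m G *m B *m G *m B *m G *m A) *m d =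
   d^T *m (A *m G *m B) *m G *m (B *m G *m A) *m d by rewrite !mulmxA.
by rewrite -F0.
Qed.

Lemma Q1 : ((x - m1)^T *m A *m xd) 0 0 = b * pp.
Proof.
rewrite Fxd F1 linearZ /= !trmx_mul hB hG -!scalemxAl mxE; congr (b * _).
rewrite ppE.
have -> : d^T *m B *m G *m A *m (G *m (A *m G *m B) *m d) =
   d^T *m (B *m G *m A) *m G *m (A *m G *m B) *m d by rewrite !mulmxA.
by rewrite -F0.
Qed.

Lemma Q2 : ((x - m2)^T *m B *m xd) 0 0 = - ((1 - b) * pp).
Proof.
rewrite Fxd -opprB F2 linearN linearZ /= !trmx_mul hA hG !mulNmx -!scalemxAl 2!mxE.
congr (- (_ * _)).
rewrite ppE.
by rewrite !mulmxA.
Qed.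

End Alg.

Section Posdef.
Variables (R : realType) (D : nat).
Local Open Scope classical_set_scope.
Local Open Scope ring_scope.

Lemma bilinE (u : 'cV[R]_D) (M : 'M[R]_D) : bilin u M u = (u^T *m M *m u) 0 0.
Proof. by []. Qed.

Lemma posdef_unit {S : 'M[R]_D} : posdef S -> S \in unitmx.
Proof.
case=> _ hp; rewrite unitmxE unitfE; apply/negP => /det0P [v v0 vS].
have := hp v^T; rewrite trmx_eq0 => /(_ v0).
by rewrite /bilin trmxK vS mul0mx mxE ltxx.
Qed.

Lemma posdef_inv (S : 'M[R]_D) : posdef S -> posdef (invmx S).
Proof.
move=> hS; have U := posdef_unit hS; case: hS => hs hp; split.
  by rewrite trmx_inv hs.
move=> v v0; set w := invmx S *m v.
have vw : v = S *m w by rewrite /w mulmxA mulmxV // mul1mx.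
have w0 : w != 0.
  by apply: contraNneq v0 => w0; rewrite vw w0 mulmx0.
have := hp w w0; rewrite /bilin.
have -> : w^T *m S *m w = v^T *m invmx S *m v.
  rewrite /w trmx_mul trmx_inv hs -[v^T *m invmx S *m S]mulmxA mulVmx // mulmx1 mulmxA.
  by [].
by [].
Qed.

Lemma posdef_comb (A B : 'M[R]_D) (a : R) : posdef A -> posdef B ->
  0 <= a <= 1 -> posdef ((1 - a) *: A + a *: B).
Proof.
case=> hsA hpA [hsB hpB] /andP[a0 a1]; split.
  by rewrite linearD !linearZ /=; congr (_ *: _ + _ *: _).
move=> v v0; rewrite /bilin mulmxDr mulmxDl -!scalemxAr -!scalemxAl.
have -> : forall (s t : R) (X Y : 'M[R]_(1,1)), (s *: X + t *: Y) 0 0 = s * X 0 0 + t * Y 0 0.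
  by move=> *; rewrite !mxE.
have := hpA v v0; have := hpB v v0; rewrite /bilin => pB pA.
have [->|an0] := eqVneq a 0.
  by rewrite subr0 mul1r mul0r addr0.
have : 0 < a by rewrite lt_def an0 a0.
move=> ap.
have : 0 < a * (v^T *m B *m v) 0 0 by apply: mulr_gt0.
have : 0 <= (1 - a) * (v^T *m A *m v) 0 0.
  by apply: mulr_ge0; [rewrite subr_ge0 | exact: ltW].
move=> *; lra.
Qed.

Lemma posdef1 : posdef (1%:M : 'M[R]_D).
Proof.
split; first by rewrite tr_scalar_mx.
move=> v v0; rewrite /bilin mulmx1 mxE.
have [i Hi] : exists i, v i 0 != 0.
  apply/existsP; apply: contraNT v0 => /existsPn H.
  apply/eqP/matrixP => i j; rewrite ord1 mxE; exact/eqP/negbNE/H.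
rewrite (bigD1 i) //= !mxE.
have : 0 < v i 0 * v i 0 by rewrite lt_def mulf_neq0 //= -expr2 sqr_ge0.
have : 0 <= \sum_(j | j != i) v^T 0 j * v j 0.
  by apply: sumr_ge0 => j _; rewrite mxE -expr2 sqr_ge0.
move=> *; lra.
Qed.

Lemma posdef_det (S : 'M[R]_D) : posdef S -> 0 < \det S.
Proof.
move=> hS.
pose f := fun t : R => \det (1%:M + t *: (S - 1%:M)).
have fE : forall t, f t = (\det (@PM R D 1%:M (S - 1%:M))).[t].
  by move=> t; rewrite /f det_eval.
have fnz : forall t, 0 <= t <= 1 -> f t != 0.
  move=> t ht; rewrite /f -unitfE -unitmxE.
  have -> : 1%:M + t *: (S - 1%:M) = (1 - t) *: 1%:M + t *: S.
    by rewrite scalerBr scalerBl scale1r addrA addrAC.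
  by apply: posdef_unit; apply: posdef_comb => //; exact: posdef1.
have f0 : f 0 = 1 by rewrite /f scale0r addr0 det1.
rewrite ltNge; apply/negP => hle.
have f1 : f 1 = \det S by rewrite /f scale1r addrC subrK.
have cf : {within `[0, 1], continuous f}.
  apply: continuous_subspaceT => t.
  have -> : f = horner (\det (@PM R D 1%:M (S - 1%:M))) by apply/funext => y; rewrite fE.
  exact: continuous_horner.
have [|c hc fc] := @IVT R f 0 1 0 ler01 cf.
  rewrite f0 f1; apply/andP; split.
    by rewrite ge_min hle orbT.
  by rewrite le_max ler01.
move: hc; rewrite in_itv /= => hc.
by move: (fnz c hc); rewrite fc eqxx.
Qed.

End Posdef.

Arguments is_derive_mulmx {R m n k M N t DM DN}.
Arguments is_derive_trmx {R m n M t D}.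
Arguments is_derive_mx_entry {R m n} M t D i j.
Arguments is_derive_mxcst {R m n} C t.
Arguments is_derive_affine {R m n} A0 A1 t.

Section Helpers.
Variable R : realType.

Lemma is_derive_subc {m n} (f : R -> 'M[R]_(m,n)) (C : 'M[R]_(m,n)) (t : R) Df :
  is_derive t 1 f Df -> is_derive t 1 (fun x => f x - C) Df.
Proof.
move=> hf.
have -> : (fun x => f x - C) = f - cst C by apply/funext => x.
by apply: is_derive_eq; rewrite subr0.
Qed.

Lemma mx00D (X Y : 'M[R]_1) : (X + Y) 0 0 = X 0 0 + Y 0 0.
Proof. by rewrite mxE. Qed.

Lemma bilin_sym {n} (M : 'M[R]_n) (u v : 'cV[R]_n) : M^T = M ->
  (u^T *m M *m v) 0 0 = (v^T *m M *m u) 0 0.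
Proof.
move=> hM; have E : forall X : 'M[R]_1, X 0 0 = X^T 0 0 by move=> X; rewrite mxE.
by rewrite [LHS]E !trmx_mul trmxK hM mulmxA.
Qed.

Lemma derivable_mulmx {m n k} (M : R -> 'M[R]_(m,n)) (N : R -> 'M[R]_(n,k)) (t : R) :
  derivable M t 1 -> derivable N t 1 -> derivable (fun x => M x *m N x) t 1.
Proof.
move=> /derivableP hM /derivableP hN.
by case: (is_derive_mulmx hM hN).
Qed.

Lemma pdf_is_derive (q : R -> R) dq (k : R) (t : R) : is_derive t 1 q dq ->
  is_derive t 1 (fun x => expR (- q x / 2) / k) (expR (- q t / 2) / k * (- dq / 2)).
Proof.
move=> hq.
have hg : is_derive t 1 (fun x => - q x / 2) (- dq / 2).
  have -> : (fun x => - q x / 2) = (- 2^-1) *: q.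
    by apply/funext => x; change (- q x / 2 = - 2^-1 * q x); ring.
  apply: is_derive_eq.
  by change (- 2^-1 * dq = - dq / 2); ring.
have he := is_derive1_comp (is_derive_expR _) hg.
have -> : (fun x => expR (- q x / 2) / k) = k^-1 *: (expR \o (fun x => - q x / 2)).
  by apply/funext => x; change (expR (- q x / 2) / k = k^-1 * expR (- q x / 2)); ring.
apply: is_derive_eq.
by change (k^-1 * (expR (- q t / 2) * (- dq / 2)) = expR (- q t / 2) / k * (- dq / 2)); ring.
Qed.

End Helpers.
Arguments pdf_is_derive {R q dq} k {t}.

Section Main.
Variables (R : realType) (D : nat) (mu1 mu2 : 'cV[R]_D) (S1 S2 : 'M[R]_D).
Hypotheses (hS1 : posdef S1) (hS2 : posdef S2).
Let A := invmx S1.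
Let B := invmx S2.

Lemma symA : A^T = A. Proof. by case: (@posdef_inv _ _ _ hS1). Qed.
Lemma symB : B^T = B. Proof. by case: (@posdef_inv _ _ _ hS2). Qed.

Lemma SalphaE x : Salpha S1 S2 x = A + x *: (B - A).
Proof. by rewrite /Salpha scalerBl scale1r scalerBr addrA addrAC. Qed.

Let Gm x := invmx (Salpha S1 S2 x).
Lemma GmE : Gm = Gf R D A (B - A).
Proof. by apply/funext => x; rewrite /Gm /Gf SalphaE. Qed.

Let cf x := (1 - x) *: (A *m mu1) + x *: (B *m mu2).
Lemma cfE : cf = fun x => A *m mu1 + x *: (B *m mu2 - A *m mu1).
Proof. by apply/funext => x; rewrite /cf scalerBl scale1r scalerBr addrA addrAC. Qed.

Let r := ridgeline mu1 mu2 S1 S2.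
Lemma rE : r = fun x => Gm x *m cf x.
Proof. by []. Qed.

Definition good x := \det (Salpha S1 S2 x) != 0.

Lemma good_near t : good t -> \forall x \near t, good x.
Proof.
rewrite /good SalphaE => h.
have H := @det_near _ _ _ _ _ h; near=> x; rewrite SalphaE; near: x; exact: H.
Unshelve. all: by end_near.
Qed.

Lemma good_unit t : good t -> Salpha S1 S2 t \in unitmx.
Proof. by rewrite unitmxE unitfE. Qed.

Lemma symG t : (Gm t)^T = Gm t.
Proof.
rewrite /Gm trmx_inv; congr invmx.
by rewrite /Salpha linearD !linearZ /= symA symB.
Qed.

Lemma r_is_derive t : good t -> is_derive t 1 r (xd R D A B (Gm t) t mu1 mu2).
Proof.
move=> gt.
have hG : is_derive t 1 Gm (- (Gm t *m (B - A) *m Gm t)).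
  rewrite GmE; apply: Gf_is_derive; by rewrite -SalphaE.
have hc : is_derive t 1 cf (B *m mu2 - A *m mu1).
  rewrite cfE; exact: is_derive_affine.
rewrite rE; apply: is_derive_eq.
  exact: is_derive_mulmx hG hc.
by [].
Qed.


Lemma q_is_derive (M : 'M[R]_D) (m : 'cV[R]_D) (t : R) Dr : M^T = M -> is_derive t 1 r Dr ->
  is_derive t 1 (fun x => bilin (r x - m) M (r x - m)) (2 * ((r t - m)^T *m M *m Dr) 0 0).
Proof.
move=> hM hr.
have he : is_derive t 1 (fun x => r x - m) Dr by exact: is_derive_subc.
have h1 := is_derive_mulmx (is_derive_trmx he) (is_derive_mxcst M t).
have h2 := is_derive_mulmx h1 he.
have h3 := is_derive_mx_entry _ _ _ 0 0 h2.
apply: is_derive_eq h3 _.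
rewrite mulmx0 addr0 mx00D (@bilin_sym _ _ _ _ _ hM).
ring.
Qed.

Let P := ppoly mu1 mu2 S1 S2.

Lemma hGS t : good t -> Gm t *m ((1 - t) *: A + t *: B) = 1%:M.
Proof. by move=> gt; rewrite mulVmx //; exact: good_unit. Qed.
Lemma hSG t : good t -> ((1 - t) *: A + t *: B) *m Gm t = 1%:M.
Proof. by move=> gt; rewrite mulmxV //; exact: good_unit. Qed.

Lemma q1_is_derive t : good t ->
  is_derive t 1 (fun x => bilin (r x - mu1) A (r x - mu1)) (2 * (t * P t)).
Proof.
move=> gt; apply: is_derive_eq (q_is_derive _ mu1 _ _ symA (r_is_derive _ gt)) _.
congr (2 * _).
exact: (Q1 _ _ _ _ _ _ (hGS _ gt) (hSG _ gt) mu1 mu2 symB (symG t)).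
Qed.

Lemma q2_is_derive t : good t ->
  is_derive t 1 (fun x => bilin (r x - mu2) B (r x - mu2)) (2 * (- ((1 - t) * P t))).
Proof.
move=> gt; apply: is_derive_eq (q_is_derive _ mu2 _ _ symB (r_is_derive _ gt)) _.
congr (2 * _).
exact: (Q2 _ _ _ _ _ _ (hGS _ gt) (hSG _ gt) mu1 mu2 symA (symG t)).
Qed.


Lemma Gm_is_derive t : good t -> is_derive t 1 Gm (- (Gm t *m (B - A) *m Gm t)).
Proof. by move=> gt; rewrite GmE; apply: Gf_is_derive; rewrite -SalphaE. Qed.

Lemma P_derivable t : good t -> derivable P t 1.
Proof.
move=> gt.
have dG : derivable Gm t 1 by case: (Gm_is_derive _ gt).
have dM : derivable (fun x => (mu2 - mu1)^T *m (A *m Gm x *m B *m Gm x *m B *m Gm x *m A) *m (mu2 - mu1)) t 1.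
  apply: derivable_mulmx; last exact: derivable_cst.
  apply: derivable_mulmx; first exact: derivable_cst.
  apply: derivable_mulmx; last exact: derivable_cst.
  apply: derivable_mulmx; last exact: dG.
  apply: derivable_mulmx; last exact: derivable_cst.
  apply: derivable_mulmx; last exact: dG.
  apply: derivable_mulmx; last exact: derivable_cst.
  apply: derivable_mulmx; last exact: dG.
  exact: derivable_cst.
exact: ((derivable_mxP _ t 1).1 dM 0 0).
Qed.

Let f1 := phi_along mu1 mu2 S1 S2 mu1 S1.
Let f2 := phi_along mu1 mu2 S1 S2 mu2 S2.

Lemma kpos (S : 'M[R]_D) : posdef S -> 0 < Num.sqrt ((2 * pi) ^+ D * \det S).
Proof.
move=> hS; rewrite sqrtr_gt0 mulr_gt0 //; last exact: posdef_det.
by rewrite exprn_gt0 // mulr_gt0 // pi_gt0.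
Qed.

Lemma f1_pos t : 0 < f1 t.
Proof. by rewrite /f1 /phi_along /normal_pdf divr_gt0 ?expR_gt0 ?kpos. Qed.
Lemma f2_pos t : 0 < f2 t.
Proof. by rewrite /f2 /phi_along /normal_pdf divr_gt0 ?expR_gt0 ?kpos. Qed.

Lemma f1_is_derive t : good t -> is_derive t 1 f1 (f1 t * (- (t * P t))).
Proof.
move=> gt.
have h := pdf_is_derive (Num.sqrt ((2 * pi) ^+ D * \det S1)) (q1_is_derive _ gt).
apply: is_derive_eq h _.
rewrite /f1 /phi_along /normal_pdf; congr (_ * _).
by field.
Qed.

Lemma f2_is_derive t : good t -> is_derive t 1 f2 (f2 t * ((1 - t) * P t)).
Proof.
move=> gt.
have h := pdf_is_derive (Num.sqrt ((2 * pi) ^+ D * \det S2)) (q2_is_derive _ gt).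
apply: is_derive_eq h _.
rewrite /f2 /phi_along /normal_pdf; congr (_ * _).
by field.
Qed.


Lemma f1_der t : good t -> derive1 f1 t = f1 t * (- (t * P t)).
Proof. by move=> gt; rewrite derive1E (f1_is_derive _ gt).(derive_val). Qed.

Lemma f2_der t : good t -> derive1 f2 t = f2 t * ((1 - t) * P t).
Proof. by move=> gt; rewrite derive1E (f2_is_derive _ gt).(derive_val). Qed.

Lemma f1_der2 a : good a ->
  derive1n 2 f1 a = f1 a * ((a * P a) ^+ 2 - P a - a * 'D_1 P a).
Proof.
move=> ga.
have E : \forall x \near a, derive1 f1 x = (f1 * (- ((@id R) * P))) x.
  near=> x.
  have gx : good x by near: x; exact: good_near.
  by rewrite f1_der.
change (derive1 (derive1 f1) a = f1 a * ((a * P a) ^+ 2 - P a - a * 'D_1 P a)).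
rewrite derive1E (near_eq_derive (1:R) E).
have hf := f1_is_derive _ ga.
have hP : is_derive a 1 P ('D_1 P a) by exact: derivableP (P_derivable _ ga).
rewrite derive_val /GRing.scale /=.
have -> : (- ((@id R) * P)) a = - (a * P a) by [].
ring.
Unshelve. all: by end_near.
Qed.

Lemma f2_der2 a : good a ->
  derive1n 2 f2 a = f2 a * (((1 - a) * P a) ^+ 2 - P a + (1 - a) * 'D_1 P a).
Proof.
move=> ga.
have E : \forall x \near a, derive1 f2 x = (f2 * ((cst 1 - (@id R)) * P)) x.
  near=> x.
  have gx : good x by near: x; exact: good_near.
  by rewrite f2_der.
change (derive1 (derive1 f2) a = f2 a * (((1 - a) * P a) ^+ 2 - P a + (1 - a) * 'D_1 P a)).
rewrite derive1E (near_eq_derive (1:R) E).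
have hf := f2_is_derive _ ga.
have hP : is_derive a 1 P ('D_1 P a) by exact: derivableP (P_derivable _ ga).
rewrite derive_val /GRing.scale /=.
have -> : ((cst 1 - (@id R)) * P) a = (1 - a) * P a by [].
have -> : (cst 1 - (@id R)) a = 1 - a by [].
ring.
Unshelve. all: by end_near.
Qed.

Lemma kappa_good a : good a ->
  kappa mu1 mu2 S1 S2 a = (P a) ^+ 2 * (1 - a * (1 - a) * P a).
Proof.
move=> ga; rewrite /kappa -/f1 -/f2.
rewrite f1_der2 // f2_der2 // f1_der // f2_der //.
have h1 := f1_pos a; have h2 := f2_pos a.
field.
by rewrite !gt_eqF.
Qed.

End Main.

Theorem theorem3 (R : realType) (D : nat) (w : R)
  (mu1 mu2 : 'cV[R]_D) (S1 S2 : 'M[R]_D)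
  (g : 'cV[R]_D -> R) (hw : 0 <= w <= 1)
  (hg : g = mixture2 w mu1 mu2 S1 S2)
  (hS1 : posdef S1) (hS2 : posdef S2) (a : R) (ha : 0 <= a <= 1) :
  kappa mu1 mu2 S1 S2 a
  = (ppoly mu1 mu2 S1 S2 a) ^+ 2
    * (1 - a * (1 - a) * ppoly mu1 mu2 S1 S2 a).
Proof.
apply: kappa_good => //.
rewrite /good -unitfE -unitmxE.
apply: posdef_unit; apply: posdef_comb => //; exact: posdef_inv.
Qed.
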